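(* Fix $N$ and $T$, and assume that for every $t\in[0,T_N)_N$ and $x\in\mathbf R^n$, $H^N(t+N^{-1},x)$ is invertible, every component of $h^N(t,x)H^N(t+N^{-1},x)^{-1}$ is strictly positive, and the sum $A^N(t,x)$ of these components satisfies $A^N(t,x)<1$. Let $\Psi^N:\mathbf R^n\to\mathbf R$ and $g^N:(0,T_N]_N\times\mathbf R^n\to\mathbf R$ be bounded, and let $u^N:[0,T_N]_N\times\mathbf R^n\to\mathbf R$ satisfy $u^N(T_N,\cdot)=\Psi^N$ and $$\partial^N_tu^N+\tfrac12\Delta^Nu^N-\langle b^N,\nabla^Nu^N\rangle-c^N(1^Nu^N)=g^N\quad\text{on }(0,T_N]_N\times\mathbf R^n.$$ Then for every $t\in[0,T_N]_N$, $$\sup_{x\in\mathbf R^n}|u^N(t,x)|\le\sup_{y}|\Psi^N(y)|+(T_N-t)\sup_{s\in(t,T_N]_N,\,y\in\mathbf R^n}|g^N(s,y)|.$$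
   Context: Fix $n\ge1$ and a real orthogonal $(n+1)\times(n+1)$ matrix $(e_{i,j})_{0\le i,j\le n}$ with $e_{0,j}>0$ for all $j$; put $e_j=\frac{1}{e_{0,j}}(e_{1,j},\dots,e_{n,j})\in\mathbf R^n$. For $N\in\mathbf N$, $T_N=[TN]/N$ and, for an interval $I\subset[0,\infty)$, $I_N=I\cap\{k/N:k\in\mathbf Z_{\ge0}\}$. Difference operators (acting on functions of $(t,x)$, componentwise on vectors): $\partial^N_kf(t,x)=\sqrt N\sum_{j=0}^nf(t,x+N^{-1/2}e_j)e_{0,j}e_{k,j}$ ($k=1,\dots,n$), $\nabla^N=(\partial^N_1,\dots,\partial^N_n)$, $\Delta^Nf(t,x)=2N\sum_{j=0}^n\{f(t,x+N^{-1/2}e_j)-f(t,x)\}e_{0,j}^2$, $\partial^N_tf(t,x)=N(f(t,x)-f(t-N^{-1},x))$, $1^Nf(t,x)=f(t-N^{-1},x)$. Market data: functions $h^{i,N}:[0,T]_N\times\mathbf R^n\to\mathbf R$, $i=0,\dots,n$, forming the row vector $h^N=(h^{0,N},\dots,h^{n,N})$; $H^N(t,x)$ is the $(n+1)\times(n+1)$ matrix whose entry in row $j$, column $i$ is $h^{i,N}(t,x+N^{-1/2}e_j)$. $\Sigma^N(t,x)$ is the $(n+1)\times(n+1)$ matrix whose first row is $(h^{0,N}(t-N^{-1},x),\dots,h^{n,N}(t-N^{-1},x))$ and whose row $k$ ($k=1,\dots,n$) is $(\partial^N_kh^{0,N}(t,x),\dots,\partial^N_kh^{n,N}(t,x))$;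 under the stated assumptions it is invertible for $t\in(0,T_N]_N$. $(c^N(t,x),b^N(t,x)):=\big(\partial^N_th^N+\tfrac12\Delta^Nh^N\big)(t,x)[\Sigma^N(t,x)]^{-1}\in\mathbf R^{1+n}$, $c^N$ being the first entry and $b^N\in\mathbf R^n$ the rest. *)

(* Defs.v *)
From HB Require Import structures.
From mathcomp Require Import all_boot all_order all_algebra.
From mathcomp Require Import all_classical all_reals.
Set Implicit Arguments. Unset Strict Implicit. Unset Printing Implicit Defensive.
Import Order.TTheory GRing.Theory Num.Theory.
Local Open Scope ring_scope.
Local Open Scope classical_set_scope.

Section Defs.
Variable R : realType.
Variable n : nat.
(* E : the orthogonal matrix (e_{i,j})_{0<=i,j<=n}; row/column 0 is ord0 *)
Variable E : 'M[R]_(n.+1).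
Variable N : nat.

Definition orthogonal_mx (M : 'M[R]_(n.+1)) : Prop := M *m M^T = 1%:M.

Definition evec (j : 'I_n.+1) : 'rV[R]_n :=
  \row_(k < n) (E (lift ord0 k) j / E ord0 j).

Definition shiftN (x : 'rV[R]_n) (j : 'I_n.+1) : 'rV[R]_n :=
  x + (Num.sqrt (N%:R))^-1 *: evec j.

Definition TN (T : R) : R := (Num.floor (T * N%:R))%:~R / N%:R.

Definition on_grid (t : R) : Prop := exists k : nat, t = k%:R / N%:R.

(* difference operators acting on f : time -> space -> R;
   k : 'I_n.+1 is the row index of E, used with k = 1..n *)
Definition dN (k : 'I_n.+1) (f : R -> 'rV[R]_n -> R) (t : R) (x : 'rV[R]_n) : R :=
  Num.sqrt (N%:R) * \sum_(j < n.+1) f t (shiftN x j) * E ord0 j * E k j.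

Definition gradN (f : R -> 'rV[R]_n -> R) (t : R) (x : 'rV[R]_n) : 'rV[R]_n :=
  \row_(i < n) dN (lift ord0 i) f t x.

Definition lapN (f : R -> 'rV[R]_n -> R) (t : R) (x : 'rV[R]_n) : R :=
  2 * N%:R * \sum_(j < n.+1) (f t (shiftN x j) - f t x) * (E ord0 j) ^+ 2.

Definition dtN (f : R -> 'rV[R]_n -> R) (t : R) (x : 'rV[R]_n) : R :=
  N%:R * (f t x - f (t - N%:R^-1) x).

Definition oneN (f : R -> 'rV[R]_n -> R) (t : R) (x : 'rV[R]_n) : R :=
  f (t - N%:R^-1) x.

Variable h : R -> 'rV[R]_n -> 'rV[R]_(n.+1).

Definition hcomp (i : 'I_n.+1) : R -> 'rV[R]_n -> R := fun t x => h t x 0 i.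

Definition Hmx (t : R) (x : 'rV[R]_n) : 'M[R]_(n.+1) :=
  \matrix_(j, i) h t (shiftN x j) 0 i.

Definition Sigmamx (t : R) (x : 'rV[R]_n) : 'M[R]_(n.+1) :=
  \matrix_(r, i) (if r == ord0 then h (t - N%:R^-1) x 0 i
                  else dN r (hcomp i) t x).

Definition cbN (t : R) (x : 'rV[R]_n) : 'rV[R]_(n.+1) :=
  (\row_(i < n.+1) (dtN (hcomp i) t x + 2^-1 * lapN (hcomp i) t x))
    *m invmx (Sigmamx t x).

Definition cN (t : R) (x : 'rV[R]_n) : R := cbN t x 0 ord0.
Definition bN (t : R) (x : 'rV[R]_n) : 'rV[R]_n := \row_(i < n) cbN t x 0 (lift ord0 i).

End Defs.

(* Main.v *)
Require Import Defs.
From HB Require Import structures.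
From mathcomp Require Import all_boot all_order all_algebra.
From mathcomp Require Import all_classical all_reals.
From mathcomp Require Import ring lra.
Import Order.TTheory GRing.Theory Num.Theory.
Local Open Scope ring_scope.
Local Open Scope classical_set_scope.
Lemma orthE (R : realType) (n : nat) (E : 'M[R]_(n.+1)) :
  orthogonal_mx E -> forall r l, \sum_j E r j * E l j = (r == l)%:R.
Proof.
move=> HE r l; have := congr1 (fun M : 'M[R]_(n.+1) => M r l) (HE : E *m E^T = 1%:M).
by rewrite !mxE => <-; apply: eq_bigr => j _; rewrite mxE.
Qed.
Arguments orthE {R n E}.

Lemma opL (R : realType) (n : nat) (E : 'M[R]_(n.+1)) (N : nat)
  (f : R -> 'rV[R]_n -> R) (b : 'rV[R]_n) (c t : R) (x : 'rV[R]_n) :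
  orthogonal_mx E ->
  let s := t + N%:R^-1 in
  dtN N f s x + 2^-1 * lapN E N f s x
     - \sum_(i < n) b 0 i * gradN E N f s x 0 i - c * oneN N f s x
  = \sum_j (N%:R * E ord0 j ^+ 2 - Num.sqrt N%:R * \sum_(k < n) b 0 k * (E ord0 j * E (lift ord0 k) j))
       * f s (shiftN E N x j) - (N%:R + c) * f t x.
Proof.
move=> HE s.
have H1 : \sum_j E ord0 j ^+ 2 = 1 by have := orthE HE ord0 ord0; rewrite eqxx => H; apply: (eq_trans _ H); apply: eq_bigr => j _; rewrite expr2.
rewrite /dtN /lapN /oneN /s addrK.
have -> : \sum_(i < n) b 0 i * gradN E N f (t + N%:R^-1) x 0 i
   = \sum_j (Num.sqrt N%:R * \sum_(k < n) b 0 k * (E ord0 j * E (lift ord0 k) j)) * f (t + N%:R^-1) (shiftN E N x j).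
  rewrite /gradN /dN.
  under eq_bigr => i _ do rewrite mxE mulr_sumr mulr_sumr.
  rewrite exchange_big /=; apply: eq_bigr => j _.
  idtac "HERE"; match goal with |- ?G => idtac G end.
  rewrite mulr_sumr mulr_suml; apply: eq_bigr => k _; ring.
have -> : \sum_j (f (t + N%:R^-1) (shiftN E N x j) - f (t + N%:R^-1) x) * E ord0 j ^+ 2
   = \sum_j E ord0 j ^+ 2 * f (t + N%:R^-1) (shiftN E N x j) - f (t + N%:R^-1) x.
  rewrite -[X in _ - X]mul1r -H1 mulr_suml -sumrB; apply: eq_bigr => j _; ring.
rewrite -[X in _ = X - _]addr0 -[X in _ = X - _]subr0.
under [in RHS]eq_bigr => j _ do rewrite mulrBl.
rewrite sumrB. match goal with |- ?G => idtac G end.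
under [in RHS]eq_bigr => j _ do rewrite -mulrA.
set A := \sum_j _ ; set B := \sum_j _. 
rewrite addr0 subr0.
have ->: 2^-1 * (2 * N%:R * (A - f (t + N%:R^-1) x)) = N%:R * (A - f (t + N%:R^-1) x).
  by rewrite mulrA mulrA mulVf ?pnatr_eq0 // mul1r.
rewrite -mulr_sumr -/A. ring.
Qed.
Arguments opL {R n E N}.

Lemma lift0_neq (n : nat) (k : 'I_n) : (lift ord0 k == ord0 :> 'I_n.+1) = false.
Proof. by []. Qed.

Lemma sum_pos (R : realType) (n : nat) (q : 'rV[R]_(n.+1)) :
  (forall i, 0 < q 0 i) -> 0 < \sum_i q 0 i.
Proof.
move=> Hq; rewrite big_ord_recl; have h1 := Hq ord0.
have h2 : 0 <= \sum_(i < n) q 0 (lift ord0 i) by apply: sumr_ge0 => i _; apply: ltW.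
lra.
Qed.

Lemma M_unit (R : realType) (n : nat) (E : 'M[R]_(n.+1)) (N : nat) (q : 'rV[R]_(n.+1)) :
  orthogonal_mx E -> (forall j, 0 < E ord0 j) -> (0 < N)%N ->
  (forall i, 0 < q 0 i) ->
  (\matrix_(r, j) (if r == ord0 then q 0 j
                   else Num.sqrt N%:R * (E ord0 j * E r j)) : 'M[R]_(n.+1)) \in unitmx.
Proof.
move=> HE Ha HN Hq; rewrite -row_free_unit; apply: inj_row_free => v Hv.
set M := \matrix_(r, j) _ in Hv.
have Hvj : forall j, v 0 ord0 * q 0 j
   + Num.sqrt N%:R * E ord0 j * \sum_(k < n) v 0 (lift ord0 k) * E (lift ord0 k) j = 0.
  move=> j; have := congr1 (fun A : 'rV_(n.+1) => A 0 j) Hv; rewrite !mxE => Hj; rewrite -[RHS]Hj.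
  rewrite big_ord_recl !mxE eqxx; congr (_ + _).
  rewrite mulr_sumr; apply: eq_bigr => k _; rewrite !mxE lift0_neq; ring.
have Hr : 0 < Num.sqrt (N%:R : R) by rewrite sqrtr_gt0 ltr0n.
have H0 : v 0 ord0 = 0.
  have : \sum_j (v 0 ord0 * q 0 j
   + Num.sqrt N%:R * E ord0 j * \sum_(k < n) v 0 (lift ord0 k) * E (lift ord0 k) j) = 0.
    by rewrite big1 // => j _; apply: Hvj.
  rewrite big_split /= -mulr_sumr.
  have -> : \sum_j Num.sqrt N%:R * E ord0 j * \sum_(k < n) v 0 (lift ord0 k) * E (lift ord0 k) j = 0.
    under eq_bigr => j _ do rewrite mulr_sumr.
    rewrite exchange_big /= big1 // => k _.
    have := orthE HE ord0 (lift ord0 k); rewrite eq_sym lift0_neq /= mulr0n => Ho.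
    transitivity (Num.sqrt N%:R * v 0 (lift ord0 k) * \sum_j E ord0 j * E (lift ord0 k) j); last by rewrite Ho mulr0.
    by rewrite mulr_sumr; apply: eq_bigr => j _; ring.
  rewrite addr0 => /eqP; rewrite mulf_eq0 => /orP [/eqP //|].
  by rewrite gt_eqF // sum_pos.
have HvE : v *m E = 0.
  apply/rowP => j; rewrite !mxE big_ord_recl H0 mul0r add0r.
  have := Hvj j; rewrite H0 mul0r add0r => /eqP; rewrite mulf_eq0 => /orP [|/eqP //].
  by rewrite mulf_eq0 (gt_eqF Hr) (gt_eqF (Ha j)).
have : v *m (E *m E^T) = 0 by rewrite mulmxA HvE mul0mx.
by rewrite (HE : E *m E^T = 1%:M) mulmx1.
Qed.

Lemma step (R : realType) (n : nat) (E : 'M[R]_(n.+1)) (N : nat)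
  (h : R -> 'rV[R]_n -> 'rV[R]_(n.+1)) (g u : R -> 'rV[R]_n -> R) (t : R) (x : 'rV[R]_n) :
  orthogonal_mx E -> (forall j, 0 < E ord0 j) -> (0 < N)%N ->
  Hmx E N h (t + N%:R^-1) x \in unitmx ->
  (forall i, 0 < (h t x *m invmx (Hmx E N h (t + N%:R^-1) x)) 0 i) ->
  dtN N u (t + N%:R^-1) x + 2^-1 * lapN E N u (t + N%:R^-1) x
     - \sum_(i < n) bN E N h (t + N%:R^-1) x 0 i * gradN E N u (t + N%:R^-1) x 0 i
     - cN E N h (t + N%:R^-1) x * oneN N u (t + N%:R^-1) x = g (t + N%:R^-1) x ->
  let q := h t x *m invmx (Hmx E N h (t + N%:R^-1) x) in
  u t x = \sum_j q 0 j * u (t + N%:R^-1) (shiftN E N x j)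
          - (\sum_i q 0 i) / N%:R * g (t + N%:R^-1) x.
Proof.
move=> HE Ha HN HH Hq Hu q.
set s := t + N%:R^-1.
set H := Hmx E N h s x.
have Hr : 0 < Num.sqrt (N%:R : R) by rewrite sqrtr_gt0 ltr0n.
set M := (\matrix_(r, j) (if r == ord0 then q 0 j
                   else Num.sqrt N%:R * (E ord0 j * E r j)) : 'M[R]_(n.+1)).
have HSig : Sigmamx E N h s x = M *m H.
  apply/matrixP => r i; rewrite !mxE.
  case: eqP => [->|/eqP Hr0].
    rewrite /s addrK.
    have -> : h t x = q *m H by rewrite /q mulmxKV.
    by rewrite mxE; apply: eq_bigr => j _; rewrite !mxE eqxx.
  rewrite /dN mulr_sumr; apply: eq_bigr => j _; rewrite !mxE /hcomp (negbTE Hr0); ring.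
have HSu : Sigmamx E N h s x \in unitmx.
  by rewrite HSig unitmx_mul HH andbT; apply: M_unit.
set cb := cbN E N h s x.
set c := cN E N h s x.
set b := bN E N h s x.
pose w := \row_j (N%:R * E ord0 j ^+ 2 - Num.sqrt N%:R * \sum_(k < n) b 0 k * (E ord0 j * E (lift ord0 k) j)).
have HwH : w *m H = (N%:R + c) *: h t x.
  apply/rowP => i; rewrite !mxE.
  have := opL (hcomp h i) b c t x HE; rewrite -/s => Hop.
  apply/eqP; rewrite -subr_eq0; apply/eqP.
  have -> : \sum_j w 0 j * H j i - (N%:R + c) * h t x 0 i
     = dtN N (hcomp h i) s x + 2^-1 * lapN E N (hcomp h i) s x
       - \sum_(i0 < n) b 0 i0 * gradN E N (hcomp h i) s x 0 i0
       - c * oneN N (hcomp h i) s x.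
    by rewrite Hop; congr (_ - _); apply: eq_bigr => j _; rewrite !mxE.
  have Hcb : cb *m Sigmamx E N h s x = \row_(i < n.+1) (dtN N (hcomp h i) s x + 2^-1 * lapN E N (hcomp h i) s x).
    by rewrite /cb /cbN mulmxKV.
  have := congr1 (fun A : 'rV_(n.+1) => A 0 i) Hcb; rewrite !mxE => <-.
  rewrite big_ord_recl !mxE eqxx /oneN /hcomp /s addrK -/s.
  rewrite /c /cN -/cb.
  have -> : \sum_(i0 < n) b 0 i0 * gradN E N (hcomp h i) s x 0 i0
     = \sum_(i0 < n) cb 0 (lift ord0 i0) * Sigmamx E N h s x (lift ord0 i0) i.
    by apply: eq_bigr => k _; rewrite !mxE lift0_neq.
  rewrite /cb /cbN !mxE. ring.
have Hw : forall j, w 0 j = (N%:R + c) * q 0 j.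
  move=> j; have : w = (N%:R + c) *: q by rewrite /q scalemxAl -HwH mulmxK.
  by move=> ->; rewrite mxE.
have Hsw : \sum_j w 0 j = N%:R.
  rewrite /w; under eq_bigr => j _ do rewrite mxE.
  rewrite sumrB -mulr_sumr.
  have := orthE HE ord0 ord0; rewrite eqxx => H1.
  have -> : \sum_j E ord0 j ^+ 2 = 1 by apply: (eq_trans _ H1); apply: eq_bigr => j _; rewrite expr2.
  have -> : \sum_j Num.sqrt N%:R * \sum_(k < n) b 0 k * (E ord0 j * E (lift ord0 k) j) = 0.
    under eq_bigr => j _ do rewrite mulr_sumr.
    rewrite exchange_big /= big1 // => k _.
    have := orthE HE ord0 (lift ord0 k); rewrite eq_sym lift0_neq /= mulr0n => Ho.
    transitivity (Num.sqrt N%:R * b 0 k * \sum_j E ord0 j * E (lift ord0 k) j); last by rewrite Ho mulr0.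
    by rewrite mulr_sumr; apply: eq_bigr => j _; ring.
  by rewrite mulr1 subr0.
set A := \sum_i q 0 i.
have HKA : (N%:R + c) * A = N%:R.
  by rewrite -[RHS]Hsw /A mulr_sumr; apply: eq_bigr => j _; rewrite Hw.
have HA : 0 < A by apply: sum_pos.
have HN0 : (N%:R : R) != 0 by rewrite pnatr_eq0 -lt0n.
have HAK : A / N%:R * (N%:R + c) = 1.
  by rewrite mulrAC [A * _]mulrC HKA mulfV.
have Hg : g s x = (N%:R + c) * (\sum_j q 0 j * u s (shiftN E N x j) - u t x).
  rewrite -Hu (opL u b c t x HE) -/s -/b -/c mulrBr mulr_sumr.
  congr (_ - _); apply: eq_bigr => j _; rewrite [RHS]mulrA -(Hw j); congr (_ * _).
  by rewrite /w mxE.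
rewrite Hg mulrA HAK mul1r; ring.
Qed.
Arguments step {R n E N h g u t x}.
Theorem mainTheorem8 (R : realType) (n : nat) (E : 'M[R]_(n.+1))
  (N : nat) (T : R) (h : R -> 'rV[R]_n -> 'rV[R]_(n.+1))
  (Psi : 'rV[R]_n -> R) (g u : R -> 'rV[R]_n -> R) :
  (0 < n)%N ->
  orthogonal_mx E ->
  (forall j, 0 < E ord0 j) ->
  (0 < N)%N ->
  (* assumptions on H^N, for t in [0, T_N)_N *)
  (forall t x, on_grid N t -> 0 <= t -> t < TN N T ->
     Hmx E N h (t + N%:R^-1) x \in unitmx
     /\ (forall i, 0 < (h t x *m invmx (Hmx E N h (t + N%:R^-1) x)) 0 i)
     /\ \sum_(i < n.+1) (h t x *m invmx (Hmx E N h (t + N%:R^-1) x)) 0 i < 1) ->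
  (* Psi^N and g^N bounded *)
  (exists M, forall y, `|Psi y| <= M) ->
  (exists M, forall s y, on_grid N s -> 0 < s -> s <= TN N T -> `|g s y| <= M) ->
  (* terminal condition *)
  (forall x, u (TN N T) x = Psi x) ->
  (* the difference equation on (0, T_N]_N x R^n *)
  (forall t x, on_grid N t -> 0 < t -> t <= TN N T ->
     dtN N u t x + 2^-1 * lapN E N u t x
     - \sum_(i < n) bN E N h t x 0 i * gradN E N u t x 0 i
     - cN E N h t x * oneN N u t x = g t x) ->
  forall t, on_grid N t -> 0 <= t -> t <= TN N T ->
    sup [set `|u t x| | x in [set: 'rV[R]_n]]
    <= sup [set `|Psi y| | y in [set: 'rV[R]_n]]
       + (TN N T - t) *
         sup [set `|g p.1 p.2| | p in [set p : R * 'rV[R]_n |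
                                    on_grid N p.1 /\ t < p.1 /\ p.1 <= TN N T]].
Proof.
move=> Hn0 HE Ha HN HH [MP HMP] [MG HMG] Hterm Heq t0 [k0 Ht0def] Ht0 HtT.
have HNr : (0 : R) < N%:R by rewrite ltr0n.
have HN0 : (N%:R : R) != 0 by rewrite gt_eqF.
have [zn Hz] : exists zn : nat, TN N T = zn%:R / N%:R.
  move: (le_trans Ht0 HtT); rewrite /TN; case: (Num.floor _) => [zn|zn] H; first by exists zn.
  exfalso; have h1 : ((Negz zn)%:~R : R) < 0 by rewrite ltrz0.
  have h2 : (0 : R) < N%:R^-1 by rewrite invr_gt0.
  have : (Negz zn)%:~R / N%:R < 0 :> R by rewrite pmulr_llt0.
  by rewrite ltNge H.
set SP := sup [set `|Psi y| | y in [set: 'rV[R]_n]].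
have HSP : forall y, `|Psi y| <= SP.
  move=> y; apply: ub_le_sup; first by exists MP => _ [z _ <-].
  by exists y.
set G0 := sup [set `|g p.1 p.2| | p in _].
have HG0 : forall s y, on_grid N s -> t0 < s -> s <= TN N T -> `|g s y| <= G0.
  move=> s y Hs Hts HsT; apply: ub_le_sup.
    exists MG => _ [p Hp <-]; move: Hp => /= [Hp1 [Hp2 Hp3]]; apply: HMG => //.
    exact: le_lt_trans Ht0 Hp2.
  by exists (s, y).
have key : forall m k, (k + m = zn)%N -> t0 <= k%:R / N%:R ->
    forall x, `|u (k%:R / N%:R) x| <= SP + m%:R / N%:R * G0.
  elim => [|m IH] k Hkm Hk x.
    rewrite addn0 in Hkm; rewrite Hkm -Hz Hterm !mul0r addr0; exact: HSP.
  set t := k%:R / N%:R.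
  have Hs : t + N%:R^-1 = k.+1%:R / N%:R by rewrite /t -natr1 mulrDl mul1r.
  have Ht0' : 0 <= t by rewrite /t divr_ge0 // ler0n.
  have HtT' : t < TN N T.
    by rewrite Hz /t ltr_pM2r ?invr_gt0 // ltr_nat -Hkm -addSnnS leq_addr.
  have HsT : t + N%:R^-1 <= TN N T.
    by rewrite Hs Hz ler_pM2r ?invr_gt0 // ler_nat -Hkm -addSnnS leq_addr.
  have Hts : t0 < t + N%:R^-1.
    by apply: le_lt_trans Hk _; rewrite ltrDl invr_gt0.
  have Hgrid : on_grid N t by exists k.
  have Hgrid' : on_grid N (t + N%:R^-1) by exists k.+1.
  have [HHu [Hq HA1]] := HH t x Hgrid Ht0' HtT'.
  have Hpos : 0 < t + N%:R^-1 by exact: le_lt_trans Ht0 Hts.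
  have := step HE Ha HN HHu Hq (Heq _ x Hgrid' Hpos HsT).
  set q := h t x *m _; set A := \sum_i q 0 i => ->.
  have IH' : forall y, `|u (t + N%:R^-1) y| <= SP + m%:R / N%:R * G0.
    move=> y; rewrite Hs; apply: IH; first by rewrite addSnnS.
    by apply: le_trans Hk _; rewrite -Hs lerDl invr_ge0 ler0n.
  have Hg := HG0 _ x Hgrid' Hts HsT.
  have HG0p : 0 <= G0 by apply: le_trans Hg.
  set B := SP + m%:R / N%:R * G0.
  have HB : 0 <= B.
    apply: addr_ge0; first by apply: le_trans (HSP 0); rewrite normr_ge0.
    by apply: mulr_ge0 => //; rewrite divr_ge0 // ler0n.
  have HA : 0 < A by apply: sum_pos.
  have H1 : `|\sum_j q 0 j * u (t + N%:R^-1) (shiftN E N x j)| <= A * B.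
    apply: le_trans (ler_norm_sum _ _ _) _.
    rewrite /A mulr_suml; apply: ler_sum => j _.
    rewrite normrM (ger0_norm (ltW (Hq j))) -/q. have Hqj := ltW (Hq j). rewrite -/q in Hqj. apply: (ler_wpM2l Hqj). exact: IH'.
  have H2 : `|A / N%:R * g (t + N%:R^-1) x| <= A / N%:R * G0.
    have HAN : 0 <= A / N%:R by rewrite divr_ge0 ?ltW.
    rewrite normrM (ger0_norm HAN); exact: (ler_wpM2l HAN Hg).
  have HX : 0 <= B + G0 / N%:R by apply: addr_ge0 => //; rewrite divr_ge0 // ler0n.
  have H3 : A * (B + G0 / N%:R) <= B + G0 / N%:R.
    by rewrite ler_piMl // ltW.
  apply: le_trans (ler_normB _ _) _.
  have -> : SP + m.+1%:R / N%:R * G0 = B + G0 / N%:R.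
    by rewrite /B -natr1; field.
  apply: le_trans _ H3.
  have -> : A * (B + G0 / N%:R) = A * B + A / N%:R * G0 by field.
  exact: lerD.
have Hk0 : (k0 <= zn)%N.
  by move: HtT; rewrite Ht0def Hz ler_pM2r ?invr_gt0 // ler_nat.
have Hzk : (k0 + (zn - k0) = zn)%N by rewrite subnKC.
apply: ge_sup; first by exists `|u t0 0|, 0.
move=> _ [x _ <-].
have -> : TN N T - t0 = (zn - k0)%:R / N%:R.
  by rewrite Hz Ht0def natrB // mulrBl.
rewrite Ht0def; apply: (key _ _ Hzk); rewrite -Ht0def. exact: lexx.
Qed.
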